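(* Let $c<2$ and $w_0=(x_0,y_0,z_0)\in\mathbb{R}^3$ with $\kappa(w_0)=c$ and $|z_0|>2$. Then (1) for $w_1=Q_x(w_0)$: $|\tau(w_1)-\tau(w_0)|\ge |y_0z_0|\max\big(|y_0|\sqrt{z_0^2-4},\ 2\sqrt{z_0^2-c-2}\big)$; (2) for $w_1=Q_y(w_0)$: $|\tau(w_1)-\tau(w_0)|\ge |x_0z_0|\max\big(|x_0|\sqrt{z_0^2-4},\ 2\sqrt{z_0^2-c-2}\big)$.
   Context: $\kappa(x,y,z)=-x^2-y^2+z^2+xyz-2$; for $u=(x,y,z)$, $\bar z(u)=-xy-z$ and $\tau(u)=-z\,\bar z(u)$. $Q_x(x,y,z)=(yz-x,y,z)$, $Q_y(x,y,z)=(x,xz-y,z)$. *)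

(* Defs.v *)
From Stdlib Require Import Reals.
Open Scope R_scope.

Definition kappa (u : R * R * R) : R :=
  let '(x, y, z) := u in - x ^ 2 - y ^ 2 + z ^ 2 + x * y * z - 2.

Definition zbar (u : R * R * R) : R :=
  let '(x, y, z) := u in - x * y - z.

Definition tau (u : R * R * R) : R :=
  let '(x, y, z) := u in - z * zbar u.

Definition Qx (u : R * R * R) : R * R * R :=
  let '(x, y, z) := u in (y * z - x, y, z).

Definition Qy (u : R * R * R) : R * R * R :=
  let '(x, y, z) := u in (x, x * z - y, z).

(* Main.v *)
Require Import Defs.
From Stdlib Require Import Reals Lra Psatz.
Open Scope R_scope.

Lemma key (y D A B : R) : 0 <= A -> 0 <= B -> D * D = y * y * A + 4 * B ->
  Rmax (Rabs y * sqrt A) (2 * sqrt B) <= Rabs D.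
Proof.
  intros hA hB hD.
  pose proof (sqrt_sqrt A hA). pose proof (sqrt_sqrt B hB).
  pose proof (sqrt_pos A). pose proof (sqrt_pos B).
  apply Rmax_lub.
  - rewrite <- (Rabs_right (Rabs y * sqrt A)) by (apply Rle_ge, Rmult_le_pos; [apply Rabs_pos|lra]).
    apply Rsqr_le_abs_0. unfold Rsqr.
    replace (Rabs y * sqrt A * (Rabs y * sqrt A)) with ((Rabs y * Rabs y) * (sqrt A * sqrt A)) by ring.
    rewrite <- Rabs_mult, Rabs_right by (apply Rle_ge; nra). nra.
  - rewrite <- (Rabs_right (2 * sqrt B)) by lra.
    apply Rsqr_le_abs_0. unfold Rsqr. nra.
Qed.

Theorem mainTheorem9 (c x0 y0 z0 : R) :
  c < 2 ->
  kappa (x0, y0, z0) = c ->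
  Rabs z0 > 2 ->
  Rabs (tau (Qx (x0, y0, z0)) - tau (x0, y0, z0)) >=
    Rabs (y0 * z0) * Rmax (Rabs y0 * sqrt (z0 ^ 2 - 4)) (2 * sqrt (z0 ^ 2 - c - 2))
  /\
  Rabs (tau (Qy (x0, y0, z0)) - tau (x0, y0, z0)) >=
    Rabs (x0 * z0) * Rmax (Rabs x0 * sqrt (z0 ^ 2 - 4)) (2 * sqrt (z0 ^ 2 - c - 2)).
Proof.
  intros hc hk hz. unfold kappa in hk. unfold tau, Qx, Qy, zbar.
  assert (hz2 : z0 ^ 2 > 4).
  { destruct (Rcase_abs z0) as [e|e]; [rewrite Rabs_left in hz by lra|rewrite Rabs_right in hz by lra]; nra. }
  split.
  - replace (- z0 * (- (y0 * z0 - x0) * y0 - z0) - - z0 * (- x0 * y0 - z0))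
      with ((y0 * z0) * (y0 * z0 - 2 * x0)) by ring.
    rewrite Rabs_mult. apply Rle_ge, Rmult_le_compat_l; [apply Rabs_pos|].
    apply key; try lra; rewrite <- hk; ring.
  - replace (- z0 * (- x0 * (x0 * z0 - y0) - z0) - - z0 * (- x0 * y0 - z0))
      with ((x0 * z0) * (x0 * z0 - 2 * y0)) by ring.
    rewrite Rabs_mult. apply Rle_ge, Rmult_le_compat_l; [apply Rabs_pos|].
    apply key; try lra; rewrite <- hk; ring.
Qed.
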